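(* Let $G=(V,E)$ be a graph with a partition $(V_1,V_2)$ of $V$ such that $G[V_1]$ and $G[V_2]$ are $P_5$-free, and let $k$ be an integer. Suppose that: $k\ge 1$; $G$ contains a $P_5$; every vertex of $G$ lies on some $P_5$ in $G$; every $P_5$ in $G$ contains at least $4$ vertices of $V_2$; and there is no vertex $v\in V_2$ that is isolated in $G[V_2]$ and for which there is a path $(v,w,x,y,z)$ in $G$ with $w\in V_1$. Let $v\in V_2$ be a vertex adjacent to at least two vertices of $V_1$, and let $C_v$ be the connected component of $G[V_2]$ containing $v$. Then every vertex $w\in V_1$ adjacent to $v$ satisfies $N(w)\subseteq V(C_v)$.
   Context: Graphs are finite, simple and undirected. A $P_5$ is a path on $5$ vertices (as a not necessarily induced subgraph), written as the sequence of its vertices; a graph is $P_5$-free if it contains no $P_5$. $G[X]$ denotes the subgraph induced by $X$; $N(w)$ is the set of neighbours of $w$ in $G$. *)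

(* Defs.v *)
From mathcomp Require Import all_boot.
Set Implicit Arguments. Unset Strict Implicit. Unset Printing Implicit Defensive.

Definition simple_graph (T : finType) (e : rel T) : Prop :=
  symmetric e /\ irreflexive e.

(* (a,b,c,d,f) is a P5 (not necessarily induced): 5 distinct vertices,
   consecutive ones adjacent. *)
Definition is_P5 (T : finType) (e : rel T) (a b c d f : T) : bool :=
  [&& uniq [:: a; b; c; d; f], e a b, e b c, e c d & e d f].

Definition has_P5 (T : finType) (e : rel T) : Prop :=
  exists a b c d f, is_P5 e a b c d f.

(* G[X] is P5-free: no P5 of G with all vertices in X
   (edges of G[X] are exactly the edges of G between vertices of X). *)
Definition P5_free_in (T : finType) (e : rel T) (X : {set T}) : Prop :=
  forall a b c d f, is_P5 e a b c d f ->
    ~~ all (fun x => x \in X) [:: a; b; c; d; f].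

Definition induced_rel (T : finType) (e : rel T) (X : {set T}) : rel T :=
  fun x y => [&& e x y, x \in X & y \in X].

Definition component (T : finType) (e : rel T) (X : {set T}) (v : T) : {set T} :=
  [set u | connect (induced_rel e X) v u].

Definition nbhd (T : finType) (e : rel T) (w : T) : {set T} := [set u | e w u].

(* Main.v *)
Require Import Defs.
From mathcomp Require Import all_boot.

Lemma P5_rev (T : finType) (e : rel T) a b c d f :
  symmetric e -> is_P5 e a b c d f -> is_P5 e f d c b a.
Proof.
move=> es /and5P [u eab ebc ecd edf].
apply/and5P; split; try by rewrite es.
by have := u; rewrite -rev_uniq.
Qed.

Lemma two_bad (T : finType) (V2 : {set T}) (s : seq T) x y :
  uniq s -> x \in s -> y \in s -> x != y -> x \notin V2 -> y \notin V2 ->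
  count (fun z => z \in V2) s <= size s - 2.
Proof.
move=> us xs ys xy xV yV.
have h : size [:: x; y] <= size (filter (predC (fun z => z \in V2)) s).
  apply: uniq_leq_size; first by rewrite /= inE xy.
  by move=> z; rewrite !inE mem_filter /= => /orP [] /eqP ->; apply/andP.
rewrite size_filter /= in h.
have := count_predC (fun z => z \in V2) s.
move: h; set m := count _ s; set n := count _ s => h1 h2.
rewrite -h2; rewrite -addnBA //; rewrite (leq_trans _ (leq_addr _ _)) //.
Qed.

Lemma mem5 (T : eqType) (x a b c d f : T) :
  x \in [:: a; b; c; d; f] -> x = a \/ x = b \/ x = c \/ x = d \/ x = f.
Proof.
rewrite !inE.
by case/orP => [/eqP|/orP [/eqP|/orP [/eqP|/orP [/eqP|/eqP]]]]; auto.
Qed.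

Ltac contra_all :=
  first
  [ match goal with H : is_true (uniq _) |- _ =>
      by move: H; rewrite /= !inE !eqxx ?orbT ?andbF end
  | match goal with H : is_true (?x \in ?A), H' : is_true (?x \in ?B),
        D : is_true [disjoint ?A & ?B] |- _ => by rewrite (disjointFr D H) in H' end
  | match goal with H : is_true (?x \in ?B), H' : is_true (?x \notin ?B) |- _ =>
      by rewrite H in H' end
  | match goal with H : is_true (?x \notin _) |- _ =>
      by rewrite !inE eqxx ?orbT in H end
  | match goal with H : is_true (?r ?x ?x), I : irreflexive ?r |- _ =>
      by rewrite I in H end
  | match goal with H : is_true (?x != ?x) |- _ => by rewrite eqxx in H end ].

Ltac neq := apply/eqP => E; subst; contra_all.

Ltac uq := rewrite /= !inE !negb_or; repeat (apply/andP; split); try done; neq.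

Theorem lemma5 (T : finType) (e : rel T) (V1 V2 : {set T}) (k : nat) :
  simple_graph e ->
  (* (V1, V2) is a partition of V *)
  [disjoint V1 & V2] -> V1 :|: V2 = [set: T] ->
  P5_free_in e V1 -> P5_free_in e V2 ->
  1 <= k ->
  has_P5 e ->
  (forall x : T, exists a b c d f,
      is_P5 e a b c d f /\ x \in [:: a; b; c; d; f]) ->
  (forall a b c d f, is_P5 e a b c d f ->
      4 <= count (fun x => x \in V2) [:: a; b; c; d; f]) ->
  ~ (exists v, [/\ v \in V2, (forall u, u \in V2 -> ~~ e v u) &
       exists w x y z, w \in V1 /\ is_P5 e v w x y z]) ->
  forall v : T, v \in V2 -> 1 < #|[set w in V1 | e v w]| ->
  forall w : T, w \in V1 -> e v w ->
    nbhd e w \subset component e V2 v.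
Proof.
move=> [es eirr] Hdis Hcov _ _ _ _ Hcover Hcnt Hiso.
have V1N x : x \in V1 -> (x \in V2) = false by move=> h; rewrite (disjointFr Hdis h).
have N2V1 x : x \notin V2 -> x \in V1.
  by move=> h; have := in_setT x; rewrite -Hcov in_setU (negbTE h) orbF.
have two a b c d f x y : is_P5 e a b c d f -> x \in [:: a; b; c; d; f] ->
    y \in [:: a; b; c; d; f] -> x != y -> x \in V1 -> y \in V1 -> False.
  move=> P xs ys xy x1 y1.
  have := Hcnt _ _ _ _ _ P.
  have /and5P [uP _ _ _ _] := P.
  have := @two_bad _ V2 _ _ _ uP xs ys xy.
  by rewrite (V1N _ x1) (V1N _ y1) => /(_ isT isT) /= h1 h2; have := leq_trans h2 h1.
have iso x : x \in V2 -> (forall u, u \in V2 -> ~~ e x u) -> False.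
  move=> x2 nx; have [a [b [c [d [f [P xs]]]]]] := Hcover x.
  have /and5P [uP eab ebc ecd edf] := P.
  have nb y : e x y -> y \in V1.
    by move=> h; apply: N2V1; apply/negP => /nx; rewrite h.
  move: xs; case/mem5 => [E|[E|[E|[E|E]]]]; subst x.
  - apply: Hiso; exists a; split => //; exists b, c, d, f; split => //; exact: nb.
  - apply: (two _ _ _ _ _ a c P); rewrite ?inE ?eqxx ?orbT //; first neq.
      by apply: nb; rewrite es.
    exact: nb.
  - apply: (two _ _ _ _ _ b d P); rewrite ?inE ?eqxx ?orbT //; first neq.
      by apply: nb; rewrite es.
    exact: nb.
  - apply: (two _ _ _ _ _ c f P); rewrite ?inE ?eqxx ?orbT //; first neq.
      by apply: nb; rewrite es.
    exact: nb.
  - apply: Hiso; exists f; split => //; exists d, c, b, a; split.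
      by apply: nb; rewrite es.
    exact: P5_rev.
move=> v v2 Hcard w w1 evw.
have [w' [w'1 evw' ww']] : exists w', [/\ w' \in V1, e v w' & w' != w].
  case/card_gt1P: Hcard => x [y [xS yS xy]]; rewrite !inE in xS yS.
  case/andP: xS => x1 ex; case/andP: yS => y1 ey.
  case: (eqVneq x w) => [E|xw]; last by exists x.
  by exists y; subst; split => //; rewrite eq_sym.
apply/subsetP => u; rewrite /component !inE => ewu.
case: (boolP (u \in V2)) => u2.
  case: (boolP (connect (induced_rel e V2) v u)) => // nc; exfalso.
  apply: (iso u u2) => z z2; apply/negP => euz.
  have zv : z != v.
    apply/eqP => E; subst z; apply: (negP nc); apply: connect1.
    by rewrite /induced_rel (es v u) euz v2 u2.
  have uv : u != v by apply/eqP => E; subst; rewrite connect0 in nc.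
  apply: (two w' v w u z w' w); rewrite ?inE ?eqxx ?orbT //.
  apply/and5P; split => //; last by rewrite es.
  uq.
exfalso; have u1 := N2V1 _ u2.
have [a [b [c [d [f [P ws]]]]]] := Hcover w.
have /and5P [uP eab ebc ecd edf] := P.
have uw : u != w by neq.
have uW : u \notin [:: a; b; c; d; f].
  by apply/negP => us; apply: (two _ _ _ _ _ u w P).
have w'W : w' \notin [:: a; b; c; d; f].
  by apply/negP => us; apply: (two _ _ _ _ _ w' w P).
move: ws; case/mem5 => [E|[E|[E|[E|E]]]]; subst w.
- apply: (two u a b c d u a); rewrite ?inE ?eqxx ?orbT //.
  by apply/and5P; split => //; [uq | rewrite es].
- apply: (two u b c d f u b); rewrite ?inE ?eqxx ?orbT //.
  by apply/and5P; split => //; [uq | rewrite es].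
- case: (boolP (v \in [:: a; b])) => vab.
    have vdf : v \notin [:: d; f].
      move: vab; rewrite !inE => /orP [] /eqP E; subst v; rewrite negb_or; apply/andP; split; neq.
    apply: (two f d c v w' c w'); rewrite ?inE ?eqxx ?orbT //; last by rewrite eq_sym.
    by apply/and5P; split => //; [uq | rewrite es | rewrite es | rewrite es].
  apply: (two a b c v w' c w'); rewrite ?inE ?eqxx ?orbT //; last by rewrite eq_sym.
  by apply/and5P; split => //; [uq | rewrite es].
- apply: (two u d c b a u d); rewrite ?inE ?eqxx ?orbT //.
  by apply/and5P; split => //; [uq | rewrite es | rewrite es | rewrite es | rewrite es].
- apply: (two u f d c b u f); rewrite ?inE ?eqxx ?orbT //.
  by apply/and5P; split => //; [uq | rewrite es | rewrite es | rewrite es | rewrite es].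
Qed.
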